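(* Consider Configuration III (two agents in mutual beacon-referenced pursuit, each referencing its own beacon, with $b>0$) with parameters $\mu>0$, $\lambda\in(0,1)$, $a\in[-1,1]$ and $a_0=0$. A circling equilibrium exists if and only if $a<0$, and at a circling equilibrium the shape variables satisfy $$\bar x_1=\bar x_2=0,\ \bar x_{1b1}=\bar x_{2b2}=0,\ \hat x_1=\hat x_2=0,\ \tilde x=-1,\ \rho=\frac{2}{(1-\lambda)\mu(-a)},\ \hat r_1=\hat r_2,\ \rho_{1b1}^2-\rho_{2b2}^2-2\hat r_1=0.$$
   Context: Two-agent setup: beacons $\mathbf r_{b1}=(0,0,-b)$, $\mathbf r_{b2}=(0,0,b)$ with $b\ge0$, $\hat{\mathbf b}=\mathbf r_{b2}-\mathbf r_{b1}=(0,0,2b)$. Agents $i=1,2$ have positions $\mathbf r_i\in\mathbb R^3$ and unit velocities $\mathbf x_i$. Let $\mathbf r=\mathbf r_1-\mathbf r_2$, $\mathbf r_{1b1}=\mathbf r_1-\mathbf r_{b1}$, $\mathbf r_{2b2}=\mathbf r_2-\mathbf r_{b2}$, $\rho=|\mathbf r|$, $\rho_{1b1}=|\mathbf r_{1b1}|$, $\rho_{2b2}=|\mathbf r_{2b2}|$, $\bar x_1=\mathbf x_1\cdot\mathbf r/\rho$, $\bar x_2=-\mathbf x_2\cdot\mathbf r/\rho$, $\bar x_{1b1}=\mathbf x_1\cdot\mathbf r_{1b1}/\rho_{1b1}$, $\bar x_{2b2}=\mathbf x_2\cdot\mathbf r_{2b2}/\rho_{2b2}$, $\tilde x=\mathbf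 x_1\cdot\mathbf x_2$, $\hat r_i=\mathbf r_i\cdot\hat{\mathbf b}$, $\hat x_i=\mathbf x_i\cdot\hat{\mathbf b}$. With gain $\mu>0$, weight $\lambda\in(0,1)$, common agent-bearing parameter $a\in[-1,1]$ and common beacon-bearing parameter $a_0\in[-1,1]$, the closed-loop dynamics are $\dot{\mathbf r}_i=\mathbf x_i$ and $$\dot{\mathbf x}_1=-(1-\lambda)\mu(\bar x_1-a)\Bigl(\tfrac{\mathbf r}{\rho}-\bar x_1\mathbf x_1\Bigr)-\lambda\mu(\bar x_{1b1}-a_0)\Bigl(\tfrac{\mathbf r_{1b1}}{\rho_{1b1}}-\bar x_{1b1}\mathbf x_1\Bigr),$$ $$\dot{\mathbf x}_2=-(1-\lambda)\mu(\bar x_2-a)\Bigl(-\tfrac{\mathbf r}{\rho}-\bar x_2\mathbf x_2\Bigr)-\lambda\mu(\bar x_{2b2}-a_0)\Bigl(\tfrac{\mathbf r_{2b2}}{\rho_{2b2}}-\bar x_{2b2}\mathbf x_2\Bigr).$$ The shape variables $(\bar x_1,\bar x_2,\bar x_{1b1},\bar x_{2b2},\tilde x,\rho,\rho_{1b1},\rho_{2b2},\hat r_1,\hat r_2,\hat x_1,\hat x_2)$ have time derivatives along this flow that depend only on the shape variables. A circling equilibrium is a state with $\rho,\rho_{1b1},\rho_{2b2}>0$ at which the time derivatives of all shape variables vanish. Configuration III is the case $b>0$ (two distinct beacons). *)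

(* Defs.v *)
From Stdlib Require Import Reals.
Open Scope R_scope.

Record vec3 := V3 { vx : R; vy : R; vz : R }.

Definition vadd (u v : vec3) : vec3 := V3 (vx u + vx v) (vy u + vy v) (vz u + vz v).
Definition vsub (u v : vec3) : vec3 := V3 (vx u - vx v) (vy u - vy v) (vz u - vz v).
Definition vscale (c : R) (v : vec3) : vec3 := V3 (c * vx v) (c * vy v) (c * vz v).
Definition dot (u v : vec3) : R := vx u * vx v + vy u * vy v + vz u * vz v.
Definition vnorm (v : vec3) : R := sqrt (dot v v).

Definition rb1 (b : R) : vec3 := V3 0 0 (- b).
Definition rb2 (b : R) : vec3 := V3 0 0 b.
Definition bhat (b : R) : vec3 := vsub (rb2 b) (rb1 b).

Definition rrel (r1 r2 : vec3) : vec3 := vsub r1 r2.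
Definition r1b1 (b : R) (r1 : vec3) : vec3 := vsub r1 (rb1 b).
Definition r2b2 (b : R) (r2 : vec3) : vec3 := vsub r2 (rb2 b).
Definition rho (r1 r2 : vec3) : R := vnorm (rrel r1 r2).
Definition rho1b1 (b : R) (r1 : vec3) : R := vnorm (r1b1 b r1).
Definition rho2b2 (b : R) (r2 : vec3) : R := vnorm (r2b2 b r2).

Definition xbar1 (r1 r2 x1 : vec3) : R := dot x1 (rrel r1 r2) / rho r1 r2.
Definition xbar2 (r1 r2 x2 : vec3) : R := - (dot x2 (rrel r1 r2) / rho r1 r2).
Definition xbar1b1 (b : R) (r1 x1 : vec3) : R := dot x1 (r1b1 b r1) / rho1b1 b r1.
Definition xbar2b2 (b : R) (r2 x2 : vec3) : R := dot x2 (r2b2 b r2) / rho2b2 b r2.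
Definition xtilde (x1 x2 : vec3) : R := dot x1 x2.
Definition rhat (b : R) (ri : vec3) : R := dot ri (bhat b).
Definition xhat (b : R) (xi : vec3) : R := dot xi (bhat b).

(* Closed-loop vector field: dr_i/dt = x_i and the following dx_i/dt. *)
Definition x1dot (mu lam a a0 b : R) (r1 r2 x1 : vec3) : vec3 :=
  let r := rrel r1 r2 in
  let p := rho r1 r2 in
  let q := r1b1 b r1 in
  let pq := rho1b1 b r1 in
  let xb := xbar1 r1 r2 x1 in
  let xbb := xbar1b1 b r1 x1 in
  vadd (vscale (- (1 - lam) * mu * (xb - a)) (vsub (vscale (/ p) r) (vscale xb x1)))
       (vscale (- lam * mu * (xbb - a0)) (vsub (vscale (/ pq) q) (vscale xbb x1))).

Definition x2dot (mu lam a a0 b : R) (r1 r2 x2 : vec3) : vec3 :=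
  let r := rrel r1 r2 in
  let p := rho r1 r2 in
  let q := r2b2 b r2 in
  let pq := rho2b2 b r2 in
  let xb := xbar2 r1 r2 x2 in
  let xbb := xbar2b2 b r2 x2 in
  vadd (vscale (- (1 - lam) * mu * (xb - a)) (vsub (vscale (- / p) r) (vscale xb x2)))
       (vscale (- lam * mu * (xbb - a0)) (vsub (vscale (/ pq) q) (vscale xbb x2))).

(* Time derivatives of the shape variables along the flow at the state
   (r1, r2, x1, x2), obtained by the chain rule with dr_i/dt = x_i,
   dx_i/dt = x1dot / x2dot. *)
(* All derivatives take the full state and parameters (uniform signature). *)
Definition d_rho (mu lam a a0 b : R) (r1 r2 x1 x2 : vec3) : R :=
  dot (rrel r1 r2) (vsub x1 x2) / rho r1 r2.
Definition d_rho1b1 (mu lam a a0 b : R) (r1 r2 x1 x2 : vec3) : R :=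
  dot (r1b1 b r1) x1 / rho1b1 b r1.
Definition d_rho2b2 (mu lam a a0 b : R) (r1 r2 x1 x2 : vec3) : R :=
  dot (r2b2 b r2) x2 / rho2b2 b r2.
Definition d_xbar1 (mu lam a a0 b : R) (r1 r2 x1 x2 : vec3) : R :=
  let p := rho r1 r2 in
  dot (x1dot mu lam a a0 b r1 r2 x1) (rrel r1 r2) / p
  + dot x1 (vsub x1 x2) / p
  - dot x1 (rrel r1 r2) * d_rho mu lam a a0 b r1 r2 x1 x2 / (p * p).
Definition d_xbar2 (mu lam a a0 b : R) (r1 r2 x1 x2 : vec3) : R :=
  let p := rho r1 r2 in
  - (dot (x2dot mu lam a a0 b r1 r2 x2) (rrel r1 r2) / p
     + dot x2 (vsub x1 x2) / p
     - dot x2 (rrel r1 r2) * d_rho mu lam a a0 b r1 r2 x1 x2 / (p * p)).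
Definition d_xbar1b1 (mu lam a a0 b : R) (r1 r2 x1 x2 : vec3) : R :=
  let p1 := rho1b1 b r1 in
  dot (x1dot mu lam a a0 b r1 r2 x1) (r1b1 b r1) / p1
  + dot x1 x1 / p1
  - dot x1 (r1b1 b r1) * d_rho1b1 mu lam a a0 b r1 r2 x1 x2 / (p1 * p1).
Definition d_xbar2b2 (mu lam a a0 b : R) (r1 r2 x1 x2 : vec3) : R :=
  let p2 := rho2b2 b r2 in
  dot (x2dot mu lam a a0 b r1 r2 x2) (r2b2 b r2) / p2
  + dot x2 x2 / p2
  - dot x2 (r2b2 b r2) * d_rho2b2 mu lam a a0 b r1 r2 x1 x2 / (p2 * p2).
Definition d_xtilde (mu lam a a0 b : R) (r1 r2 x1 x2 : vec3) : R :=
  dot (x1dot mu lam a a0 b r1 r2 x1) x2 + dot x1 (x2dot mu lam a a0 b r1 r2 x2).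
Definition d_rhat1 (mu lam a a0 b : R) (r1 r2 x1 x2 : vec3) : R := dot x1 (bhat b).
Definition d_rhat2 (mu lam a a0 b : R) (r1 r2 x1 x2 : vec3) : R := dot x2 (bhat b).
Definition d_xhat1 (mu lam a a0 b : R) (r1 r2 x1 x2 : vec3) : R :=
  dot (x1dot mu lam a a0 b r1 r2 x1) (bhat b).
Definition d_xhat2 (mu lam a a0 b : R) (r1 r2 x1 x2 : vec3) : R :=
  dot (x2dot mu lam a a0 b r1 r2 x2) (bhat b).

Definition circling_equilibrium (mu lam a a0 b : R) (r1 r2 x1 x2 : vec3) : Prop :=
  vnorm x1 = 1 /\ vnorm x2 = 1 /\
  0 < rho r1 r2 /\ 0 < rho1b1 b r1 /\ 0 < rho2b2 b r2 /\
  d_xbar1 mu lam a a0 b r1 r2 x1 x2 = 0 /\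
  d_xbar2 mu lam a a0 b r1 r2 x1 x2 = 0 /\
  d_xbar1b1 mu lam a a0 b r1 r2 x1 x2 = 0 /\
  d_xbar2b2 mu lam a a0 b r1 r2 x1 x2 = 0 /\
  d_xtilde mu lam a a0 b r1 r2 x1 x2 = 0 /\
  d_rho mu lam a a0 b r1 r2 x1 x2 = 0 /\
  d_rho1b1 mu lam a a0 b r1 r2 x1 x2 = 0 /\
  d_rho2b2 mu lam a a0 b r1 r2 x1 x2 = 0 /\
  d_rhat1 mu lam a a0 b r1 r2 x1 x2 = 0 /\
  d_rhat2 mu lam a a0 b r1 r2 x1 x2 = 0 /\
  d_xhat1 mu lam a a0 b r1 r2 x1 x2 = 0 /\
  d_xhat2 mu lam a a0 b r1 r2 x1 x2 = 0.

(* Main.v *)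
Require Import Defs.
From Stdlib Require Import Reals Lra Psatz.
Open Scope R_scope.

Lemma dot_comm u v : dot u v = dot v u.
Proof. destruct u, v; unfold dot; simpl; ring. Qed.
Lemma dot_add_l u v w : dot (vadd u v) w = dot u w + dot v w.
Proof. destruct u, v, w; unfold dot, vadd; simpl; ring. Qed.
Lemma dot_sub_l u v w : dot (vsub u v) w = dot u w - dot v w.
Proof. destruct u, v, w; unfold dot, vsub; simpl; ring. Qed.
Lemma dot_sub_r u v w : dot w (vsub u v) = dot w u - dot w v.
Proof. destruct u, v, w; unfold dot, vsub; simpl; ring. Qed.
Lemma dot_scale_l c u w : dot (vscale c u) w = c * dot u w.
Proof. destruct u, w; unfold dot, vscale; simpl; ring. Qed.
Lemma dot_ge0 u : 0 <= dot u u.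
Proof. destruct u; unfold dot; simpl; nra. Qed.
Lemma dot_zero u w : dot u u = 0 -> dot u w = 0.
Proof. destruct u as [u1 u2 u3], w; unfold dot; simpl; intro H.
  assert (u1 = 0) by nra. assert (u2 = 0) by nra. assert (u3 = 0) by nra. subst; ring. Qed.
Lemma norm_sq v : vnorm v ^ 2 = dot v v.
Proof. unfold vnorm. apply pow2_sqrt, dot_ge0. Qed.
Lemma norm1 v : vnorm v = 1 -> dot v v = 1.
Proof. intro H. rewrite <- norm_sq, H. ring. Qed.

Lemma x1dot_dot mu lam a a0 b r1 r2 x1 w :
  dot (x1dot mu lam a a0 b r1 r2 x1) w =
  (-(1-lam)*mu*(xbar1 r1 r2 x1 - a)) * (/ rho r1 r2 * dot (rrel r1 r2) w - xbar1 r1 r2 x1 * dot x1 w)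
  + (-lam*mu*(xbar1b1 b r1 x1 - a0)) * (/ rho1b1 b r1 * dot (r1b1 b r1) w - xbar1b1 b r1 x1 * dot x1 w).
Proof. unfold x1dot; cbv zeta. rewrite dot_add_l, !dot_scale_l, !dot_sub_l, !dot_scale_l. replace (dot (rrel r1 r2) w) with (dot r1 w - dot r2 w) by (unfold rrel; symmetry; apply dot_sub_l). ring. Qed.

Lemma x2dot_dot mu lam a a0 b r1 r2 x2 w :
  dot (x2dot mu lam a a0 b r1 r2 x2) w =
  (-(1-lam)*mu*(xbar2 r1 r2 x2 - a)) * (- / rho r1 r2 * dot (rrel r1 r2) w - xbar2 r1 r2 x2 * dot x2 w)
  + (-lam*mu*(xbar2b2 b r2 x2 - a0)) * (/ rho2b2 b r2 * dot (r2b2 b r2) w - xbar2b2 b r2 x2 * dot x2 w).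
Proof. unfold x2dot; cbv zeta. rewrite dot_add_l, !dot_scale_l, !dot_sub_l, !dot_scale_l. replace (dot (rrel r1 r2) w) with (dot r1 w - dot r2 w) by (unfold rrel; symmetry; apply dot_sub_l). ring. Qed.

Lemma geo1 b r1 r2 w : dot (r1b1 b r1) w = dot (r2b2 b r2) w + dot (rrel r1 r2) w + dot (bhat b) w.
Proof. destruct r1, r2, w; unfold dot, r1b1, r2b2, rrel, bhat, rb1, rb2, vsub; simpl; ring. Qed.
Lemma geo2 b r1 r2 : dot (rrel r1 r2) (r1b1 b r1) + dot (rrel r1 r2) (r2b2 b r2) = dot r1 r1 - dot r2 r2.
Proof. destruct r1, r2; unfold dot, r1b1, r2b2, rrel, bhat, rb1, rb2, vsub; simpl; ring. Qed.
Lemma geo3 b r1 r2 : dot (r1b1 b r1) (r1b1 b r1) - dot (r2b2 b r2) (r2b2 b r2) - 2 * rhat b r1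
  = dot r1 r1 - dot r2 r2 - dot (rrel r1 r2) (bhat b).
Proof. destruct r1, r2; unfold rhat, dot, r1b1, r2b2, rrel, bhat, rb1, rb2, vsub; simpl; ring. Qed.
Lemma geo4 b r1 r2 : rhat b r1 - rhat b r2 = dot (rrel r1 r2) (bhat b).
Proof. destruct r1, r2; unfold rhat, dot, r1b1, r2b2, rrel, bhat, rb1, rb2, vsub; simpl; ring. Qed.
Lemma dot_exp x y c : dot (vsub x (vscale c y)) (vsub x (vscale c y)) = dot x x - 2*c*dot x y + c^2 * dot y y.
Proof. destruct x, y; unfold dot, vsub, vscale; simpl; ring. Qed.
Lemma forward mu lam a b r1 r2 x1 x2 : 0 < mu -> 0 < lam < 1 -> 0 < b ->
  circling_equilibrium mu lam a 0 b r1 r2 x1 x2 ->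
  a < 0 /\
     xbar1 r1 r2 x1 = 0 /\ xbar2 r1 r2 x2 = 0 /\
     xbar1b1 b r1 x1 = 0 /\ xbar2b2 b r2 x2 = 0 /\
     xhat b x1 = 0 /\ xhat b x2 = 0 /\
     xtilde x1 x2 = -1 /\
     rho r1 r2 = 2 / ((1 - lam) * mu * (- a)) /\
     rhat b r1 = rhat b r2 /\
     (rho1b1 b r1) ^ 2 - (rho2b2 b r2) ^ 2 - 2 * rhat b r1 = 0.
Proof.
  intros Hmu Hlam Hb H.
  destruct H as [Hn1 [Hn2 [Hp [Hp1 [Hp2 [Dx1 [Dx2 [Db1 [Db2 [Dt [Dr [Dr1 [Dr2 [Dh1 [Dh2 [Dk1 Dk2]]]]]]]]]]]]]]]].
  apply norm1 in Hn1. apply norm1 in Hn2.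
  assert (HRR : dot (rrel r1 r2) (rrel r1 r2) = rho r1 r2 ^ 2) by (unfold rho; rewrite norm_sq; auto).
  assert (hq1 : dot x1 (r1b1 b r1) = 0).
  { unfold d_rho1b1 in Dr1. rewrite dot_comm.
    match type of Dr1 with ?L = 0 => replace (dot (r1b1 b r1) x1) with (L * rho1b1 b r1) by (field; lra) end.
    rewrite Dr1; ring. }
  assert (hq2 : dot x2 (r2b2 b r2) = 0).
  { unfold d_rho2b2 in Dr2. rewrite dot_comm.
    match type of Dr2 with ?L = 0 => replace (dot (r2b2 b r2) x2) with (L * rho2b2 b r2) by (field; lra) end.
    rewrite Dr2; ring. }
  assert (ht1 : xbar1b1 b r1 x1 = 0) by (unfold xbar1b1; rewrite hq1; unfold Rdiv; ring).
  assert (ht2 : xbar2b2 b r2 x2 = 0) by (unfold xbar2b2; rewrite hq2; unfold Rdiv; ring).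
  assert (he : dot x1 (rrel r1 r2) = dot x2 (rrel r1 r2)).
  { generalize Dr; intro Dr'. unfold d_rho in Dr'. rewrite dot_sub_r in Dr'.
    rewrite (dot_comm x1), (dot_comm x2).
    match type of Dr' with ?L = 0 => replace (dot (rrel r1 r2) x1) with (L * rho r1 r2 + dot (rrel r1 r2) x2) by (field; lra) end.
    rewrite Dr'; ring. }
  assert (hs1 : dot x1 (rrel r1 r2) = xbar1 r1 r2 x1 * rho r1 r2) by (unfold xbar1; field; lra).
  assert (hs2 : xbar2 r1 r2 x2 = - xbar1 r1 r2 x1) by (unfold xbar2, xbar1; rewrite he; ring).
  set (s := xbar1 r1 r2 x1) in *.
  set (p := rho r1 r2) in *.
  set (p1 := rho1b1 b r1) in *. set (p2 := rho2b2 b r2) in *.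
  set (k := (1 - lam) * mu).
  assert (Hk : 0 < k) by (unfold k; nra).
  unfold d_xbar1b1 in Db1. rewrite x1dot_dot, ht1, hq1, Hn1, Dr1 in Db1.
  fold p p1 s in Db1.
  assert (hA : - k * (s - a) * dot (rrel r1 r2) (r1b1 b r1) + p = 0).
  { match type of Db1 with ?L = 0 => replace (- k * (s - a) * dot (rrel r1 r2) (r1b1 b r1) + p) with (L * (p*p1)) by (unfold k; field; lra) end.
    rewrite Db1; ring. }
  unfold d_xbar2b2 in Db2. rewrite x2dot_dot, ht2, hq2, Hn2, Dr2, hs2 in Db2.
  fold p p2 s in Db2.
  assert (hB : - k * (- s - a) * dot (rrel r1 r2) (r2b2 b r2) - p = 0).
  { match type of Db2 with ?L = 0 => replace (- k * (- s - a) * dot (rrel r1 r2) (r2b2 b r2) - p) with (- (L * (p*p2))) by (unfold k; field; lra) end.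
    rewrite Db2; ring. }
  unfold d_rhat1 in Dh1. unfold d_rhat2 in Dh2.
  unfold d_xhat1 in Dk1. rewrite x1dot_dot, ht1, Dh1 in Dk1. fold p p1 s in Dk1.
  assert (hRB : dot (rrel r1 r2) (bhat b) = 0).
  { assert (hc : - k * (s - a) * dot (rrel r1 r2) (bhat b) = 0).
    { match type of Dk1 with ?L = 0 => replace (- k * (s - a) * dot (rrel r1 r2) (bhat b)) with (L * p) by (unfold k; field; lra) end.
      rewrite Dk1; ring. }
    assert (s - a <> 0) by (intro E; rewrite E in hA; lra).
    apply Rmult_integral in hc; destruct hc as [hc|hc]; auto.
    exfalso; apply Rmult_integral in hc; destruct hc; lra. }
  unfold d_xbar1 in Dx1. rewrite x1dot_dot, ht1, Dr, (dot_sub_r x1 x2 x1), Hn1, HRR, hs1 in Dx1. fold p p1 s in Dx1.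
  unfold d_xbar2 in Dx2. rewrite x2dot_dot, ht2, Dr, (dot_sub_r x1 x2 x2), Hn2, HRR, hs2 in Dx2.
  rewrite <- he, hs1 in Dx2. fold p p2 s in Dx2.
  set (xt := dot x1 x2) in *.
  rewrite (dot_comm x2 x1) in Dx2. fold xt in Dx2.
  assert (E1 : - k * (s - a) * p * (1 - s^2) + 1 - xt = 0).
  { match type of Dx1 with ?L = 0 => replace (- k * (s - a) * p * (1 - s^2) + 1 - xt) with (L * p) by (unfold k; field; lra) end.
    rewrite Dx1; ring. }
  assert (E2 : - k * (- s - a) * p * (1 - s^2) + 1 - xt = 0).
  { match type of Dx2 with ?L = 0 => replace (- k * (- s - a) * p * (1 - s^2) + 1 - xt) with (L * p) by (unfold k; field; lra) end.
    rewrite Dx2; ring. }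
  set (X1 := dot (rrel r1 r2) (r1b1 b r1)) in *.
  set (X2 := dot (rrel r1 r2) (r2b2 b r2)) in *.
  assert (Hs : s = 0).
  { assert (k * s * p * (1 - s^2) = 0) by nra.
    destruct (Req_dec s 0) as [|Hs0]; auto.
    assert (Hs2 : 1 - s^2 = 0).
    { apply Rmult_integral in H; destruct H; auto.
      exfalso. apply Rmult_integral in H; destruct H as [H|H]; [|lra].
      apply Rmult_integral in H; destruct H; lra. }
    exfalso.
    assert (hu := dot_zero (vsub x1 (vscale (s/p) (rrel r1 r2))) (r1b1 b r1)).
    rewrite dot_exp, Hn1, hs1, HRR, dot_sub_l, dot_scale_l, hq1 in hu. fold X1 in hu.
    assert (hu2 : 0 - s / p * X1 = 0) by (apply hu; field_simplify; [nra| lra]).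
    assert (X1 <> 0) by (intro E; rewrite E in hA; lra).
    assert (s / p <> 0) by (unfold Rdiv; apply Rmult_integral_contrapositive; split; [auto| apply Rinv_neq_0_compat; lra]).
    apply (Rmult_integral_contrapositive (s/p) X1); auto; lra. }
  rewrite Hs in *.
  assert (hg := geo1 b r1 r2 (rrel r1 r2)).
  rewrite (dot_comm (r1b1 b r1)), (dot_comm (r2b2 b r2)), (dot_comm (bhat b)), HRR, hRB in hg.
  fold X1 X2 in hg.
  assert (Hkap : k * a * p = -2) by nra.
  assert (Hkp : 0 < k * p) by nra. assert (Ha : a < 0) by nra.
  assert (HX : X1 + X2 = 0) by nra.
  split; auto. split; auto. split; [rewrite hs2; ring|].
  split; auto. split; auto. split; [unfold xhat; auto|]. split; [unfold xhat; auto|].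
  split; [unfold xtilde; fold xt; lra|].
  split; [fold k; field_simplify_eq; [nra| nra]|].
  split; [assert (G := geo4 b r1 r2); lra|].
  unfold p1, p2, rho1b1, rho2b2. rewrite !norm_sq, geo3, <- (geo2 b r1 r2), hRB. fold X1 X2. lra.
Qed.


Lemma existence mu lam a b : 0 < mu -> 0 < lam < 1 -> a < 0 -> 0 < b ->
  exists r1 r2 x1 x2 : vec3, circling_equilibrium mu lam a 0 b r1 r2 x1 x2.
Proof.
  intros Hmu Hlam Ha Hb.
  set (k := (1-lam)*mu).
  assert (Hk : 0 < k) by (unfold k; nra).
  set (q := 2 / (k * (-a))).
  assert (Hq : 0 < q) by (unfold q; apply Rdiv_lt_0_compat; nra).
  assert (Hkq : k * a * q = -2) by (unfold q; field; nra).
  exists (V3 (q/2) 0 0), (V3 (-(q/2)) 0 0), (V3 0 1 0), (V3 0 (-1) 0).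
  assert (hr : rho (V3 (q/2) 0 0) (V3 (-(q/2)) 0 0) = q).
  { unfold rho, vnorm, rrel, vsub, dot; simpl. rewrite <- sqrt_Rsqr by lra. f_equal. unfold Rsqr. field. }
  assert (hp1 : 0 < rho1b1 b (V3 (q/2) 0 0)).
  { unfold rho1b1, vnorm, r1b1, vsub, dot, rb1; simpl. apply sqrt_lt_R0. nra. }
  assert (hp2 : 0 < rho2b2 b (V3 (-(q/2)) 0 0)).
  { unfold rho2b2, vnorm, r2b2, vsub, dot, rb2; simpl. apply sqrt_lt_R0. nra. }
  unfold circling_equilibrium, d_xbar1, d_xbar2, d_xbar1b1, d_xbar2b2, d_xtilde, d_rho, d_rho1b1, d_rho2b2,
    d_rhat1, d_rhat2, d_xhat1, d_xhat2, x1dot, x2dot, xbar1, xbar2, xbar1b1, xbar2b2.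
  cbv zeta. rewrite hr.
  set (p1 := rho1b1 b (V3 (q/2) 0 0)) in *.
  set (p2 := rho2b2 b (V3 (-(q/2)) 0 0)) in *.
  unfold vnorm, dot, vadd, vsub, vscale, rrel, r1b1, r2b2, bhat, rb1, rb2; simpl.
  repeat split; try lra.
  all: try (replace (0*0+1*1+0*0) with 1 by ring; apply sqrt_1).
  all: try (replace (0*0+ -1* -1+0*0) with 1 by ring; apply sqrt_1).
  all: unfold q, k; field; repeat split; try nra; lra.
Qed.

Theorem proposition5p2 (mu lam a b : R) :
  0 < mu -> 0 < lam < 1 -> -1 <= a <= 1 -> 0 < b ->
  ((exists r1 r2 x1 x2 : vec3, circling_equilibrium mu lam a 0 b r1 r2 x1 x2) <-> a < 0)
  /\
  (forall r1 r2 x1 x2 : vec3, circling_equilibrium mu lam a 0 b r1 r2 x1 x2 ->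
     xbar1 r1 r2 x1 = 0 /\ xbar2 r1 r2 x2 = 0 /\
     xbar1b1 b r1 x1 = 0 /\ xbar2b2 b r2 x2 = 0 /\
     xhat b x1 = 0 /\ xhat b x2 = 0 /\
     xtilde x1 x2 = -1 /\
     rho r1 r2 = 2 / ((1 - lam) * mu * (- a)) /\
     rhat b r1 = rhat b r2 /\
     (rho1b1 b r1) ^ 2 - (rho2b2 b r2) ^ 2 - 2 * rhat b r1 = 0).
Proof.
  intros Hmu Hlam Ha Hb. split.
  - split.
    + intros [r1 [r2 [x1 [x2 H]]]]. apply (forward mu lam a b r1 r2 x1 x2); auto.
    + intro Hneg. apply existence; auto.
  - intros r1 r2 x1 x2 H. apply (forward mu lam a b r1 r2 x1 x2); auto.
Qed.
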